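(* Let $B\in\mathbb{Z}^{d\times j}$, $j\le d$, have linearly independent columns $B_1,\dots,B_j$. Then for every $\ell\in\{1,\dots,j\}$, $$|\Pi(B)\cap\mathbb{Z}^d|=\mathrm{frac}_B[\ell]\cdot|\Pi(B\setminus B_\ell)\cap\mathbb{Z}^d|.$$
   Context: For $B\in\mathbb{Z}^{d\times j}$ with linearly independent columns, the fundamental parallelepiped is $\Pi(B)=\{Bx: x\in[0,1)^j\}$ (for $j=0$, $\Pi$ of the empty matrix is $\{0\}$). $B\setminus B_\ell$ denotes the $d\times(j-1)$ matrix obtained by deleting column $B_\ell$. For every $b\in\mathbb{Z}^d$ in the real span of the columns of $B$ there is a unique $x\in\mathbb{Q}^j$ with $Bx=b$. The fractionality $\mathrm{frac}_B[i]$ of index $i$ is the maximum, over all such $b\in\mathbb{Z}^d\cap\operatorname{span}(B)$, of the denominator $z_i\ge1$ of $x_i$ written in lowest terms $x_i=y_i/z_i$ with $\gcd(y_i,z_i)=1$. *)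

(* Defs.v *)
From mathcomp Require Import all_boot all_order all_algebra.
Set Implicit Arguments. Unset Strict Implicit. Unset Printing Implicit Defensive.
Import Order.TTheory GRing.Theory Num.Theory.
Local Open Scope ring_scope.

Definition ratM (m n : nat) (A : 'M[int]_(m, n)) : 'M[rat]_(m, n) :=
  map_mx (fun z : int => z%:~R) A.

Definition lin_indep_cols (d j : nat) (B : 'M[int]_(d, j)) : Prop :=
  \rank (ratM B) = j.

(* B \ B_l : delete column l; column c of the result is column bump l c < j of B
   (insubd default l is never used). *)
Definition del_col (d j : nat) (B : 'M[int]_(d, j)) (l : 'I_j) : 'M[int]_(d, j.-1) :=
  \matrix_(i < d, c < j.-1) B i (insubd l (bump l c)).

Definition in_par_int (d j : nat) (B : 'M[int]_(d, j)) (b : 'cV[int]_d) : Prop :=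
  exists x : 'cV[rat]_j,
    (forall i : 'I_j, 0 <= x i 0 < 1) /\ ratM b = ratM B *m x.

Definition has_card (T : eqType) (P : T -> Prop) (n : nat) : Prop :=
  exists s : seq T, uniq s /\ (forall t, t \in s <-> P t) /\ size s = n.

Definition is_frac (d j : nat) (B : 'M[int]_(d, j)) (i : 'I_j) (f : nat) : Prop :=
  (exists (b : 'cV[int]_d) (x : 'cV[rat]_j),
      ratM b = ratM B *m x /\ denq (x i 0) = f%:Z) /\
  (forall (b : 'cV[int]_d) (x : 'cV[rat]_j),
      ratM b = ratM B *m x -> denq (x i 0) <= f%:Z).

(* Main.v *)
Require Import Defs.
From mathcomp Require Import all_boot all_order all_algebra.
From mathcomp Require Import zify ring lra.
Set Implicit Arguments. Unset Strict Implicit. Unset Printing Implicit Defensive.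
Import Order.TTheory GRing.Theory Num.Theory.
Local Open Scope ring_scope.

Definition intv n (v : 'cV[rat]_n) : bool := [forall i, v i 0 \is a Num.int].
Definition toZ n (v : 'cV[rat]_n) : 'cV[int]_n := \col_i numq (v i 0).
Definition vec n D (k : {ffun 'I_n -> 'I_D.+1}) : 'cV[rat]_n :=
  \col_i ((k i : nat)%:R / D.+1%:R).
Definition in01 n (v : 'cV[rat]_n) : Prop := forall i, 0 <= v i 0 < 1.
Definition intN n D (x : 'cV[rat]_n) : Prop := forall i, D.+1%:R * x i 0 \is a Num.int.
Definition inX d n (M : 'M[int]_(d, n)) x := intv (ratM M *m x).

Lemma redP (z : int) D : (`|(z %% D.+1%:Z)%Z|%N < D.+1)%N.
Proof.
have h1 := modz_ge0 z (isT : D.+1%:Z != 0).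
have h2 := ltz_pmod z (isT : 0 < D.+1%:Z).
by rewrite -ltz_nat gez0_abs.
Qed.

Definition red n D (x : 'cV[rat]_n) : {ffun 'I_n -> 'I_D.+1} :=
  [ffun i => Ordinal (redP (numq (D.+1%:R * x i 0)) D)].

Lemma intvP n (v : 'cV[rat]_n) : reflect (forall i, v i 0 \is a Num.int) (intv v).
Proof. exact: forallP. Qed.

Lemma intvD n (u v : 'cV[rat]_n) : intv u -> intv v -> intv (u + v).
Proof. by move=> /intvP hu /intvP hv; apply/intvP => i; rewrite mxE rpredD. Qed.
Lemma intvB n (u v : 'cV[rat]_n) : intv u -> intv v -> intv (u - v).
Proof. by move=> /intvP hu /intvP hv; apply/intvP => i; rewrite !mxE rpredB. Qed.
Lemma intv0 n : intv (0 : 'cV[rat]_n).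
Proof. by apply/intvP => i; rewrite mxE rpred0. Qed.

Lemma intv_ratM n (b : 'cV[int]_n) : intv (ratM b).
Proof. by apply/intvP => i; rewrite mxE intr_int. Qed.

Lemma ratM_toZ n (v : 'cV[rat]_n) : intv v -> ratM (toZ v) = v.
Proof.
move=> /intvP h; apply/matrixP => i k; rewrite !mxE ord1 numqK //.
Qed.

Lemma toZ_ratM n (b : 'cV[int]_n) : toZ (ratM b) = b.
Proof. by apply/matrixP => i k; rewrite !mxE ord1 numq_int. Qed.

Lemma intv_mul d n (M : 'M[int]_(d, n)) v : intv v -> intv (ratM M *m v).
Proof.
move=> /intvP h; apply/intvP => i; rewrite mxE rpred_sum // => k _.
by rewrite mxE rpredM ?intr_int.
Qed.

Lemma inXB d n (M : 'M[int]_(d, n)) x y : inX M x -> inX M y -> inX M (x - y).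
Proof. by rewrite /inX mulmxBr; apply: intvB. Qed.
Lemma inXD d n (M : 'M[int]_(d, n)) x y : inX M x -> inX M y -> inX M (x + y).
Proof. by rewrite /inX mulmxDr; apply: intvD. Qed.
Lemma inX_int d n (M : 'M[int]_(d, n)) x y : inX M x -> intv (x - y) -> inX M y.
Proof.
move=> hx hxy; have -> : y = x - (x - y) by rewrite opprB addrC subrK.
by apply: inXB => //; apply: intv_mul.
Qed.

Lemma vec_in01 n D (k : {ffun 'I_n -> 'I_D.+1}) : in01 (vec k).
Proof.
move=> i; rewrite mxE divr_ge0 ?ler0n //= ltr_pdivrMr ?ltr0n // mul1r ltr_nat.
exact: ltn_ord.
Qed.

Lemma intN_vec n D (k : {ffun 'I_n -> 'I_D.+1}) : intN D (vec k).
Proof. by move=> i; rewrite mxE mulrC divfK ?pnatr_eq0 // rpred_nat. Qed.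

Lemma intND n D (x y : 'cV[rat]_n) : intN D x -> intN D y -> intN D (x + y).
Proof. by move=> hx hy i; rewrite mxE mulrDr rpredD. Qed.
Lemma intNB n D (x y : 'cV[rat]_n) : intN D x -> intN D y -> intN D (x - y).
Proof. by move=> hx hy i; rewrite !mxE mulrBr rpredB. Qed.

Lemma vec_inj n D : injective (@vec n D).
Proof.
move=> k k' h; apply/ffunP => i; apply/val_inj/eqP.
have := congr1 (fun v : 'cV[rat]_n => v i 0 * D.+1%:R) h.
by rewrite !mxE !divfK ?pnatr_eq0 // => /eqP; rewrite eqr_nat.
Qed.

Lemma eq01 n (u v : 'cV[rat]_n) : in01 u -> in01 v -> intv (u - v) -> u = v.
Proof.
move=> hu hv /intvP h; apply/matrixP => i k; rewrite ord1.
have := h i; rewrite !mxE => /intrP [m hm].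
have /andP [u0 u1] := hu i; have /andP [v0 v1] := hv i.
have m1 : m%:~R < 1 :> rat by rewrite -hm; lra.
have m2 : -1 < m%:~R :> rat by rewrite -hm; lra.
have m2' : (-m)%:~R < 1 :> rat by rewrite intrN; lra.
rewrite ltrz1 in m1; rewrite ltrz1 in m2'.
have m0 : m = 0 by (timeout 10 lia).
by apply/eqP; rewrite -subr_eq0 hm m0.
Qed.

Lemma red_spec n D (x : 'cV[rat]_n) : intN D x -> intv (vec (red D x) - x).
Proof.
move=> hx; apply/intvP => i; rewrite !mxE ffunE /=.
set z := numq _.
have hz : z%:~R = D.+1%:R * x i 0 by rewrite /z numqK.
have hN : (D.+1%:Z)%:~R = D.+1%:R :> rat by [].
rewrite natr_absz ger0_norm ?modz_ge0 //.
have e : (z %% D.+1%:Z)%Z = z - (z %/ D.+1%:Z)%Z * D.+1%:Z.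
  by rewrite {2}(divz_eq z D.+1%:Z) addrC addKr.
rewrite e rmorphB rmorphM /= hz hN.
have -> : (D.+1%:R * x i 0 - (z %/ D.+1)%Z%:~R * D.+1%:R) / D.+1%:R - x i 0
   = - (z %/ D.+1)%Z%:~R :> rat.
  by field; rewrite addrC natr1 pnatr_eq0.
by rewrite -intrN intr_int.
Qed.

Lemma red_canon n D (x : 'cV[rat]_n) k : intN D x -> intv (x - vec k) -> red D x = k.
Proof.
move=> hx hk; apply: vec_inj; apply: eq01; try exact: vec_in01.
have -> : vec (red D x) - vec k = (vec (red D x) - x) + (x - vec k).
  by rewrite addrA subrK.
by apply: intvD => //; apply: red_spec.
Qed.

Lemma red_val n D (x : 'cV[rat]_n) i (z : int) :
  D.+1%:R * x i 0 = z%:~R -> (red D x i : nat) = `|(z %% D.+1%:Z)%Z|%N.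
Proof. by move=> h; rewrite ffunE /= h numq_int. Qed.

Lemma count_par d n (M : 'M[int]_(d, n)) D :
  (forall x : 'cV[rat]_n, inX M x -> intN D x) ->
  (forall x y : 'cV[rat]_n, ratM M *m x = ratM M *m y -> x = y) ->
  has_card (in_par_int M) #|[set k : {ffun 'I_n -> 'I_D.+1} | inX M (vec k)]|.
Proof.
move=> KD injM.
set A := [set k : {ffun 'I_n -> 'I_D.+1} | inX M (vec k)].
exists [seq toZ (ratM M *m vec k) | k <- enum A]; split; [|split].
- rewrite map_inj_in_uniq ?enum_uniq // => k k'.
  rewrite !mem_enum !inE => hk hk' /(congr1 (@ratM _ _)).
  by rewrite !ratM_toZ // => /injM /vec_inj.
- move=> t; split.
  + case/mapP => k; rewrite mem_enum inE => hk ->.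
    exists (vec k); split; first exact: vec_in01.
    by rewrite ratM_toZ.
  + case=> x [h01 hx].
    have hX : inX M x by rewrite /inX -hx intv_ratM.
    have hr : vec (red D x) = x.
      apply: eq01 => //; first exact: vec_in01.
      exact: red_spec (KD _ hX).
    apply/mapP; exists (red D x); first by rewrite mem_enum inE hr.
    by rewrite hr -hx toZ_ratM.
- by rewrite size_map -cardE.
Qed.

Section NatPart.
Local Open Scope nat_scope.

Lemma cyc N (P : nat -> bool) : 0 < N -> P 0 ->
  (forall t s, t < N -> s <= t -> P t -> P s -> P (t - s)) ->
  (forall t s, t < N -> s < N -> P t -> P s -> P ((t + s) %% N)) ->
  exists g, [/\ 0 < g, g %| N & forall t, t < N -> P t = (g %| t)].
Proof.
move=> N0 P0 subP addP.
case: (boolP [exists t : 'I_N, (0 < t) && P t]) => [/existsP ex | /existsPn nex].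
  have exP : exists t, [&& 0 < t, t < N & P t].
    by case: ex => t /andP[t0 Pt]; exists t; rewrite t0 Pt ltn_ord.
  case: (ex_minnP exP) => g /and3P[g0 gN Pg] gmin.
  have M1 : forall m, m * g < N -> P (m * g).
    elim=> [|m IH] h; first by rewrite mul0n.
    have h' : m * g < N by rewrite mulSn in h; (timeout 3 lia).
    have := addP (m * g) g h' gN (IH h') Pg.
    by rewrite mulSn addnC modn_small //; rewrite mulSn addnC in h.
  have M2 : forall t, t < N -> P t -> forall q, q * g <= t -> P (t - q * g).
    move=> t tN Pt; elim=> [|q IH] h; first by rewrite mul0n subn0.
    have h' : q * g <= t by rewrite mulSn in h; (timeout 3 lia).
    have := subP (t - q * g) g _ _ (IH h') Pg.
    rewrite mulSn in h *.
    have -> : t - q * g - g = t - (g + q * g) by (timeout 3 lia).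
    by apply; (timeout 3 lia).
  have Dg : forall t, t < N -> P t -> g %| t.
    move=> t tN Pt.
    have := M2 t tN Pt (t %/ g) (leq_trunc_div t g).
    have e := divn_eq t g.
    have -> : t - t %/ g * g = t %% g by (timeout 3 lia).
    rewrite /dvdn; case: (posnP (t %% g)) => [->//|r0 Pr].
    have := gmin (t %% g); rewrite r0 Pr /=.
    have -> : t %% g < N by have := ltn_pmod t g0; (timeout 3 lia).
    by move=> /(_ isT); rewrite leqNgt ltn_pmod.
  have gN' : g %| N.
    rewrite /dvdn; case: (posnP (N %% g)) => [_ //|r0].
    have e := divn_eq N g.
    have rg := ltn_pmod N g0.
    have hq : N %/ g * g < N by (timeout 3 lia).
    have := addP _ _ hq gN (M1 _ hq) Pg.
    have -> : (N %/ g * g + g) %% N = g - N %% g.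
      have -> : N %/ g * g + g = (g - N %% g) + N by (timeout 3 lia).
      by rewrite modnDr modn_small //; (timeout 3 lia).
    move=> Pr; have := gmin (g - N %% g); rewrite Pr.
    have -> : 0 < g - N %% g by (timeout 3 lia).
    have -> : g - N %% g < N by (timeout 3 lia).
    by move=> /(_ isT); (timeout 3 lia).
  exists g; split => // t tN; apply/idP/idP; first exact: Dg.
  move=> gt; rewrite -(divnK gt); apply: M1; rewrite divnK //.
exists N; split => // t tN.
case: (posnP t) => [->|t0]; first by rewrite P0 dvdn0.
have := nex (Ordinal tN); rewrite /= t0 /= => /negbTE ->.
by rewrite gtnNdvd.
Qed.

Lemma card_mult D g : 0 < g -> g %| D.+1 ->
  #|[set t : 'I_D.+1 | g %| t]| = D.+1 %/ g.
Proof.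
move=> g0 gD.
have bnd : forall m, m < D.+1 %/ g -> m * g < D.+1.
  by move=> m hm; rewrite -[X in _ < X](divnK gD) ltn_mul2r g0.
have -> : [set t : 'I_D.+1 | g %| t] =
          [set inord (m * g) | m : 'I_(D.+1 %/ g)].
  apply/setP => t; rewrite inE; apply/idP/imsetP.
    move=> gt.
    have ht : t %/ g < D.+1 %/ g.
      by rewrite ltn_divLR // divnK // ltn_ord.
    exists (Ordinal ht) => //; apply: val_inj; rewrite /= inordK ?divnK //.
  case=> m _ ->; rewrite inordK ?dvdn_mull //; exact: bnd.
rewrite card_in_imset ?card_ord // => m m' _ _ /(congr1 val).
rewrite /= !inordK ?bnd // => /eqP; rewrite eqn_pmul2r // => /eqP h.
exact: val_inj.
Qed.

End NatPart.

Lemma intvN n (u : 'cV[rat]_n) : intv u -> intv (- u).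
Proof. by move=> /intvP hu; apply/intvP => i; rewrite mxE rpredN. Qed.

Lemma inX_red d n (M : 'M[int]_(d, n)) D x :
  inX M x -> intN D x -> inX M (vec (red D x)).
Proof.
move=> hx hN; apply: inX_int hx _.
by rewrite -opprB; apply: intvN; apply: red_spec.
Qed.

Lemma red_valn n D (x : 'cV[rat]_n) i (m : nat) :
  D.+1%:R * x i 0 = m%:R -> (red D x i : nat) = (m %% D.+1)%N.
Proof. by move=> h; rewrite (@red_val _ _ _ _ m%:Z) // modz_nat absz_nat. Qed.

Lemma vec_ent n D (k : {ffun 'I_n -> 'I_D.+1}) i : D.+1%:R * vec k i 0 = (k i : nat)%:R.
Proof. by rewrite mxE mulrC divfK ?pnatr_eq0. Qed.

Lemma card_bij (T1 T2 : finType) (X : {set T1}) (Y : {set T2}) f g :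
  {in X, forall x, f x \in Y} -> {in Y, forall y, g y \in X} ->
  {in X, cancel f g} -> {in Y, cancel g f} -> #|X| = #|Y|.
Proof.
move=> fXY gYX fK gK; apply/eqP; rewrite eqn_leq; apply/andP; split.
  rewrite -(card_in_imset (can_in_inj fK)); apply: subset_leq_card.
  by apply/subsetP => _ /imsetP[x hx ->]; apply: fXY.
rewrite -(card_in_imset (can_in_inj gK)); apply: subset_leq_card.
by apply/subsetP => _ /imsetP[x hx ->]; apply: gYX.
Qed.

Lemma zmod3 (V : zmodType) (a b c : V) : a + b - c = a - (c - b).
Proof. by rewrite opprB addrA. Qed.
Lemma zmod3' (V : zmodType) (a b c : V) : a - b - c = a - (c + b).
Proof. by rewrite opprD addrA addrAC. Qed.


Lemma den_bound (c : nat) (y : rat) : (0 < c)%N -> c%:R * y \is a Num.int -> denq y <= c%:Z.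
Proof.
move=> c0 /intrP [m]; case: ratP => n e cop hm.
have h : c%:Z * n = m * e.+1%:Z.
  apply: (@intr_inj rat); rewrite !rmorphM /= -hm.
  have -> : (e.+1%:Z)%:~R = e.+1%:R :> rat by [].
  have -> : (c%:Z)%:~R = c%:R :> rat by [].
  by field; rewrite addrC natr1 pnatr_eq0.
have : (e.+1 %| `|n| * c)%N.
  rewrite mulnC; have := congr1 absz h; rewrite !abszM /= => ->.
  exact: dvdn_mull.
rewrite Gauss_dvdr; last by rewrite coprime_sym.
by move=> /(dvdn_leq c0); rewrite lez_nat.
Qed.

Lemma vec_entB n D (k k0 : {ffun 'I_n -> 'I_D.+1}) i :
  D.+1%:R * (vec k - vec k0) i 0 = (k i : nat)%:R - (k0 i : nat)%:R.
Proof. by rewrite !mxE mulrBr !(mulrC D.+1%:R) !divfK ?pnatr_eq0. Qed.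
Lemma vec_entD n D (k k0 : {ffun 'I_n -> 'I_D.+1}) i :
  D.+1%:R * (vec k + vec k0) i 0 = (k i : nat)%:R + (k0 i : nat)%:R.
Proof. by rewrite !mxE mulrDr !(mulrC D.+1%:R) !divfK ?pnatr_eq0. Qed.

Lemma main_comb d n (M : 'M[int]_(d, n)) (l : 'I_n) D :
  (forall x : 'cV[rat]_n, inX M x -> intN D x) ->
  exists f : nat,
    #|[set k : {ffun 'I_n -> 'I_D.+1} | inX M (vec k)]| =
      (f * #|[set k : {ffun 'I_n -> 'I_D.+1} | inX M (vec k) && (k l == ord0)]|)%N
    /\ is_frac M l f.
Proof.
move=> KD.
set A := [set k : {ffun 'I_n -> 'I_D.+1} | inX M (vec k)].
set subk := fun k k0 : {ffun 'I_n -> 'I_D.+1} => red D (vec k - vec k0).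
set addk := fun k k0 : {ffun 'I_n -> 'I_D.+1} => red D (vec k + vec k0).
have subA : forall k k0, k \in A -> k0 \in A -> subk k k0 \in A.
  move=> k k0; rewrite !inE => hk hk0; apply: inX_red; first exact: inXB.
  by apply: intNB; apply: intN_vec.
have addA : forall k k0, k \in A -> k0 \in A -> addk k k0 \in A.
  move=> k k0; rewrite !inE => hk hk0; apply: inX_red; first exact: inXD.
  by apply: intND; apply: intN_vec.
have subl : forall k k0 : {ffun 'I_n -> 'I_D.+1}, (k0 l <= k l)%N ->
    (subk k k0 l : nat) = (k l - k0 l)%N.
  move=> k k0 h; rewrite /subk (@red_valn _ _ _ _ (k l - k0 l)%N).
    by rewrite modn_small //; have := ltn_ord (k l); lia.
  by rewrite vec_entB natrB.
have addl : forall k k0 : {ffun 'I_n -> 'I_D.+1},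
    (addk k k0 l : nat) = ((k l + k0 l) %% D.+1)%N.
  move=> k k0; rewrite /addk (@red_valn _ _ _ _ (k l + k0 l)%N) //.
  by rewrite vec_entD natrD.
set P := fun t : nat => [exists k in A, (k l : nat) == t].
have z0 : red D 0 \in A.
  rewrite inE; apply: inX_red; first by rewrite /inX mulmx0 intv0.
  by move=> i; rewrite mxE mulr0 rpred0.
have z0l : (red D (0 : 'cV[rat]_n) l : nat) = 0%N.
  by rewrite (@red_valn _ _ _ _ 0%N) // mxE mulr0.
have [g [g0 gN hg]] : exists g, [/\ (0 < g)%N, (g %| D.+1)%N &
      forall t, (t < D.+1)%N -> P t = (g %| t)%N].
  apply: cyc => //.
  - by apply/existsP; exists (red D 0); rewrite z0 z0l.
  - move=> t s tN st /existsP[k /andP[hk /eqP hkl]] /existsP[k0 /andP[hk0 /eqP hk0l]].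
    apply/existsP; exists (subk k k0); rewrite subA //= subl ?hkl ?hk0l //.
  - move=> t s tN sN /existsP[k /andP[hk /eqP hkl]] /existsP[k0 /andP[hk0 /eqP hk0l]].
    by apply/existsP; exists (addk k k0); rewrite addA //= addl hkl hk0l.
set F0 := [set k in A | k l == ord0].
have Fcard : forall t : 'I_D.+1,
    #|[set k in A | k l == t]| = (if P t then #|F0| else 0)%N.
  move=> t; case Pt: (P t).
    case/existsP: Pt => k0 /andP[hk0 /eqP e0].
    apply: (@card_bij _ _ _ _ (fun k => subk k k0) (fun k => addk k k0)).
    - move=> k; rewrite in_set => /andP[hk /eqP hkl].
      rewrite in_set subA //=; apply/eqP/val_inj; rewrite /= subl hkl e0 ?subnn //.
    - move=> k; rewrite /F0 in_set => /andP[hk /eqP hkl].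
      rewrite in_set addA //=; apply/eqP/val_inj.
      by rewrite /= addl hkl /= add0n e0 modn_small.
    - move=> k; rewrite inE => /andP[hk _]; rewrite /addk /subk.
      apply: red_canon; first by apply: intND; apply: intN_vec.
      by rewrite zmod3; apply: red_spec; apply: intNB; apply: intN_vec.
    - move=> k; rewrite inE => /andP[hk _]; rewrite /addk /subk.
      apply: red_canon; first by apply: intNB; apply: intN_vec.
      by rewrite zmod3'; apply: red_spec; apply: intND; apply: intN_vec.
  apply/eqP; rewrite cards_eq0; apply/eqP/setP => k; rewrite !inE.
  apply/negbTE/negP => /andP[hk /eqP hkl].
  move: Pt => /negbT/negP; apply; apply/existsP; exists k; by rewrite inE hk hkl eqxx.
have cardA : #|A| = (\sum_(t < D.+1) #|[set k in A | k l == t]|)%N.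
  rewrite -sum1_card (partition_big (P := fun k => k \in A) (fun k => k l) predT) //=.
  by apply: eq_bigr => t _; rewrite -sum1_card; apply: eq_bigl => k; rewrite !inE.
have cardT : #|[set t : 'I_D.+1 | P t]| = (D.+1 %/ g)%N.
  rewrite -(card_mult g0 gN); apply: eq_card => t; by rewrite !inE hg ?ltn_ord.
exists (D.+1 %/ g)%N; split.
  rewrite cardA; under eq_bigr => t _ do rewrite Fcard.
  rewrite -big_mkcond /=.
  rewrite (eq_bigl (fun t : 'I_D.+1 => t \in [set t : 'I_D.+1 | P t])); last first.
    by move=> t; rewrite inE.
  rewrite sum_nat_const cardT; congr (_ * _)%N.
  by apply: eq_card => k; rewrite !inE.
have q0 : (0 < D.+1 %/ g)%N by rewrite divn_gt0 // dvdn_leq.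
have eN : D.+1 = (D.+1 %/ g * g)%N by rewrite divnK.
split.
  case: (ltnP g D.+1) => hgN.
    have Pg : P g by rewrite hg // dvdnn.
    case/existsP: Pg => k /andP[hk /eqP hkl].
    exists (toZ (ratM M *m vec k)), (vec k); split.
      by rewrite ratM_toZ //; move: hk; rewrite inE.
    have -> : vec k l 0 = ((D.+1 %/ g)%:Z%:~R)^-1.
      rewrite mxE hkl.
      have -> : ((D.+1 %/ g)%:Z%:~R : rat) = (D.+1 %/ g)%:R by [].
      rewrite [X in _ / X%:R]eN natrM; field.
      by rewrite !pnatr_eq0 -!lt0n q0 g0.
    by rewrite denqVz // -lt0n.
  have gE : g = D.+1 by apply/eqP; rewrite eqn_leq hgN dvdn_leq.
  exists 0, 0; split; first by rewrite mulmx0; apply/matrixP => i j; rewrite !mxE.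
  by rewrite gE divnn /= mxE -rat0 denq_int.
move=> b x hx.
have hX : inX M x by rewrite /inX -hx intv_ratM.
have hN := KD x hX.
set k := red D x.
have hk : k \in A by rewrite inE; apply: inX_red.
have Pk : P (k l) by apply/existsP; exists k; rewrite hk eqxx.
rewrite hg ?ltn_ord in Pk.
have /intvP/(_ l) := red_spec hN.
rewrite -/k => hz.
apply: den_bound => //.
have -> : x l 0 = vec k l 0 - (vec k - x) l 0.
  by rewrite !mxE opprB addrCA subrr addr0.
rewrite mulrBr; apply: rpredB; last by rewrite rpredM ?rpred_nat.
set m := ((k l : nat) %/ g)%N.
have em : (k l : nat) = (m * g)%N by rewrite divnK.
have -> : (D.+1 %/ g)%:R * vec k l 0 = m%:R :> rat.
  rewrite mxE em [X in _ / X%:R]eN !natrM; field.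
  by rewrite !pnatr_eq0 -!lt0n q0 g0.
exact: rpred_nat.
all: by [].
Qed.


Definition ins j (l : 'I_j.+1) (x' : 'cV[rat]_j) : 'cV[rat]_j.+1 :=
  \col_i oapp (fun c => x' c 0) 0 (unlift l i).

Lemma ins_lift j (l : 'I_j.+1) (x' : 'cV[rat]_j) c : ins l x' (lift l c) 0 = x' c 0.
Proof. by rewrite mxE liftK. Qed.

Lemma insubd_bump j (l : 'I_j.+1) (c : 'I_j) : insubd l (bump l c) = lift l c.
Proof. apply: val_inj; rewrite insubdK //; exact: (ltn_ord (lift l c)). Qed.

Lemma del_col_mul d j (B : 'M[int]_(d, j.+1)) (l : 'I_j.+1) (x' : 'cV[rat]_j) :
  ratM (del_col B l) *m x' = ratM B *m ins l x'.
Proof.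
apply/matrixP => a z; rewrite {z}(ord1 z) /ratM !mxE (bigD1_ord l) //= !mxE unlift_none mulr0 add0r.
by apply: eq_bigr => c _; rewrite !mxE liftK insubd_bump.
Qed.

Lemma clear_den (s : seq rat) : exists D : nat, forall q, q \in s -> D.+1%:R * q \is a Num.int.
Proof.
elim: s => [|q s [D IH]]; first by exists 0%N.
case: (denqP q) => e he.
exists (D.+1 * e.+1).-1 => p; rewrite prednK ?muln_gt0 // inE => /orP[/eqP ->|ps].
  rewrite natrM -mulrA.
  have -> : e.+1%:R * q = (numq q)%:~R by rewrite numqE he mulrC.
  by rewrite rpredM ?rpred_nat ?intr_int.
by rewrite natrM (mulrC D.+1%:R) -mulrA; apply: rpredM; [apply: rpred_nat | apply: IH].
Qed.

Definition insk j D (l : 'I_j.+1) (k' : {ffun 'I_j -> 'I_D.+1}) : {ffun 'I_j.+1 -> 'I_D.+1} :=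
  [ffun i => oapp k' ord0 (unlift l i)].
Definition delk j D (l : 'I_j.+1) (k : {ffun 'I_j.+1 -> 'I_D.+1}) : {ffun 'I_j -> 'I_D.+1} :=
  [ffun c => k (lift l c)].

Lemma vec_insk j D (l : 'I_j.+1) (k' : {ffun 'I_j -> 'I_D.+1}) :
  vec (insk l k') = ins l (vec k').
Proof.
apply/matrixP => i z; rewrite !mxE ffunE.
by case: unliftP => [c _|_] /=; rewrite ?mxE ?mul0r.
Qed.

Lemma card_del d j (B : 'M[int]_(d, j.+1)) (l : 'I_j.+1) D :
  #|[set k' : {ffun 'I_j -> 'I_D.+1} | inX (del_col B l) (vec k')]| =
  #|[set k : {ffun 'I_j.+1 -> 'I_D.+1} | inX B (vec k) && (k l == ord0)]|.
Proof.
apply: (@card_bij _ _ _ _ (@insk j D l) (@delk j D l)).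
- move=> k'; rewrite !inE /inX del_col_mul -vec_insk => ->.
  by rewrite ffunE unlift_none.
- move=> k; rewrite !inE => /andP[hk /eqP hl].
  rewrite /inX del_col_mul.
  have -> : ins l (vec (delk l k)) = vec k; last by [].
  apply/matrixP => i z; rewrite !mxE.
  by case: unliftP => [c ->|->] /=; rewrite ?mxE ?ffunE ?hl ?mul0r.
- by move=> k' _; apply/ffunP => c; rewrite !ffunE liftK.
- move=> k; rewrite !inE => /andP[_ /eqP hl]; apply/ffunP => i; rewrite !ffunE.
  by case: unliftP => [c ->|->] /=; rewrite ?ffunE ?hl.
Qed.

Theorem mainTheorem3 (d j : nat) (B : 'M[int]_(d, j)) (l : 'I_j) :
  (j <= d)%N -> lin_indep_cols B ->
  exists (N1 N2 f : nat),
    has_card (in_par_int B) N1 /\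
    has_card (in_par_int (del_col B l)) N2 /\
    is_frac B l f /\
    N1 = (f * N2)%N.
Proof.
move=> _; case: j B l => [|j] B l hind; first by case: l.
have : row_full (ratM B) by rewrite /row_full hind.
case/row_fullP => Q hQ.
have [D hD] := clear_den (codom (fun p : 'I_j.+1 * 'I_d => Q p.1 p.2)).
have xQ : forall x : 'cV[rat]_j.+1, x = Q *m (ratM B *m x).
  by move=> x; rewrite mulmxA hQ mul1mx.
have KD : forall x : 'cV[rat]_j.+1, inX B x -> intN D x.
  move=> x /intvP hx i; rewrite (xQ x) mxE mulr_sumr rpred_sum // => k _.
  rewrite mulrA rpredM ?hx //.
  exact: (hD _ (codom_f (fun p : 'I_j.+1 * 'I_d => Q p.1 p.2) (i, k))).
have injB : forall x y : 'cV[rat]_j.+1, ratM B *m x = ratM B *m y -> x = y.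
  by move=> x y h; rewrite (xQ x) (xQ y) h.
have KD' : forall x : 'cV[rat]_j, inX (del_col B l) x -> intN D x.
  move=> x; rewrite /inX del_col_mul => /KD h c.
  by have := h (lift l c); rewrite ins_lift.
have injB' : forall x y : 'cV[rat]_j,
    ratM (del_col B l) *m x = ratM (del_col B l) *m y -> x = y.
  move=> x y; rewrite !del_col_mul => /injB h.
  apply/matrixP => c z; rewrite (ord1 z) -!(ins_lift l) h //.
have [f [hf hfrac]] := main_comb l KD.
exists #|[set k : {ffun 'I_j.+1 -> 'I_D.+1} | inX B (vec k)]|,
       #|[set k' : {ffun 'I_j -> 'I_D.+1} | inX (del_col B l) (vec k')]|, f.
split; first exact: count_par.
split; first exact: count_par.
by split => //; rewrite hf card_del.
Qed.
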